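(* The functor $X:\mathsf{ComRings}\to\mathsf{Ab}$, with the endomorphism $V$ and map $\langle\ \rangle$ described below, is a pre-Witt functor.
   Context: $\mathsf{ComRings}$ is the category of commutative rings with unity; $p$ is a fixed prime. For $R$ commutative, $R^{\mathbb N_0}$ carries the product topology; $V(r_0,r_1,\dots)=p(0,r_0,r_1,\dots)$, $\langle r\rangle=(r,r^p,r^{p^2},\dots)$, and $X(R)$ is the closed subgroup of $R^{\mathbb N_0}$ generated by $\{V^n\langle r\rangle\mid n\in\mathbb N_0, r\in R\}$, with $V$ and $\langle\ \rangle:R\to X(R)$ induced. A pre-Witt functor is a functor $F:\mathsf{ComRings}\to\mathsf{Ab}$ with functorial group endomorphisms $V:F(R)\to F(R)$ and functorial set maps $\langle\ \rangle:R\to F(R)$ such that: (1) $\langle 0\rangle=0$, and if $p\ne2$ then $\langle -x\rangle=-\langle x\rangle$; (2) $x\mapsto V\langle x^p\rangle-p\langle x\rangle$ is additive $R\to F(R)$; (3) $F(R)$ is complete with respect to the filtration $\{V^nF(R)\}_{n\ge0}$; (4) if $A$ is $p$-torsion free then $F(A)$ is $p$-torsion free. *)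

(* Defs.v *)
From mathcomp Require Import all_boot all_order all_algebra.
Set Implicit Arguments. Unset Strict Implicit. Unset Printing Implicit Defensive.
Import GRing.Theory.
Local Open Scope ring_scope.

(* Elements of R^{N_0} are sequences nat -> R; group law is componentwise. *)
Section X.
Variables (p : nat) (R : comPzRingType).

Definition Vop (s : nat -> R) : nat -> R :=
  fun n => if n is k.+1 then p%:R * s k else 0.

Definition teich (r : R) : nat -> R := fun n => r ^+ (p ^ n)%N.

Definition zero_seq : nat -> R := fun _ => 0.
Definition sub_seq (s t : nat -> R) : nat -> R := fun n => s n - t n.
Definition add_seq (s t : nat -> R) : nat -> R := fun n => s n + t n.
Definition scale_seq (m : nat) (s : nat -> R) : nat -> R := fun n => s n *+ m.

Definition Xgens (s : nat -> R) : Prop :=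
  exists (n : nat) (r : R), s = iter n Vop (teich r).

Definition is_subgroup (C : (nat -> R) -> Prop) : Prop :=
  C zero_seq /\ forall s t, C s -> C t -> C (sub_seq s t).

(* closed for the product topology on R^{N_0} (each factor R discrete):
   basic open neighbourhoods of s are the sets of sequences agreeing with s
   on the first N coordinates. *)
Definition prod_closed (C : (nat -> R) -> Prop) : Prop :=
  forall s, (forall N : nat, exists c, C c /\ forall i, (i < N)%N -> c i = s i) -> C s.

Definition Xset (s : nat -> R) : Prop :=
  forall C, is_subgroup C -> prod_closed C -> (forall g, Xgens g -> C g) -> C s.

Definition VnX (n : nat) (s : nat -> R) : Prop :=
  exists t, Xset t /\ s = iter n Vop t.

(* X(R) is complete w.r.t. the filtration V^n X(R): the canonical map
   X(R) -> lim_n X(R)/V^n X(R) is bijective. *)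
Definition X_complete : Prop :=
  (forall s, Xset s -> (forall n, VnX n s) -> s = zero_seq) /\
  (forall x : nat -> nat -> R,
      (forall n, Xset (x n)) ->
      (forall n, VnX n (sub_seq (x n.+1) (x n))) ->
      exists y, Xset y /\ forall n, VnX n (sub_seq y (x n))).

Definition p_torsion_free : Prop := forall a : R, a *+ p = 0 -> a = 0.

End X.

Definition Xmap (R S : comPzRingType) (f : {rmorphism R -> S}) (s : nat -> R)
  : nat -> S := fun n => f (s n).

Definition X_is_preWitt (p : nat) : Prop :=
  (forall R : comPzRingType, is_subgroup (@Xset p R)) /\
  (forall (R : comPzRingType) s, Xset p s -> Xset p (@Vop p R s)) /\
  (forall (R : comPzRingType) (r : R), Xset p (teich p r)) /\
  (forall (R S : comPzRingType) (f : {rmorphism R -> S}) s,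
      Xset p s -> Xset p (Xmap f s)) /\
  (forall (R S : comPzRingType) (f : {rmorphism R -> S}) s,
      Xmap f (Vop p s) = Vop p (Xmap f s)) /\
  (forall (R S : comPzRingType) (f : {rmorphism R -> S}) (r : R),
      Xmap f (teich p r) = teich p (f r)) /\
  (forall R : comPzRingType, teich p (0 : R) = zero_seq R) /\
  (p != 2%N -> forall (R : comPzRingType) (x : R),
      teich p (- x) = sub_seq (zero_seq R) (teich p x)) /\
  (forall (R : comPzRingType) (x y : R),
      let g := fun z : R => sub_seq (Vop p (teich p (z ^+ p))) (scale_seq p (teich p z)) in
      g (x + y) = add_seq (g x) (g y)) /\
  (forall R : comPzRingType, X_complete p R) /\
  (forall A : comPzRingType, p_torsion_free p A ->
      forall s, Xset p s -> scale_seq p s = zero_seq A -> s = zero_seq A).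

(* Main.v *)
Require Import Defs.
From mathcomp Require Import all_boot all_order all_algebra.
From Stdlib Require Import FunctionalExtensionality IndefiniteDescription.
Set Implicit Arguments. Unset Strict Implicit. Unset Printing Implicit Defensive.
Import GRing.Theory.
Local Open Scope ring_scope.

Section Pf.
Variables (p : nat) (R : comPzRingType).
Local Notation V := (@Vop p R).

Lemma Vn_coord n t i : iter n V t i = if (i < n)%N then 0 else p%:R ^+ n * t (i - n)%N.
Proof.
elim: n i => [|n IH] [|i] /=.
- by rewrite expr0 mul1r.
- by rewrite expr0 mul1r subn0.
- by rewrite /Vop.
- rewrite /Vop IH ltnS subSS; case: ifP => _; first by rewrite mulr0.
  by rewrite exprS mulrA.
Qed.

Lemma Vn_low n t i : (i < n)%N -> iter n V t i = 0.
Proof. by move=> h; rewrite Vn_coord h. Qed.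

Lemma Vn_sub n s t : iter n V (sub_seq s t) = sub_seq (iter n V s) (iter n V t).
Proof.
apply: functional_extensionality => i; rewrite /sub_seq (Vn_coord n s) (Vn_coord n t) Vn_coord.
by case: ifP => _; rewrite ?subrr ?mulrBr.
Qed.

Lemma Vn_add n s t : iter n V (add_seq s t) = add_seq (iter n V s) (iter n V t).
Proof.
apply: functional_extensionality => i; rewrite /add_seq (Vn_coord n s) (Vn_coord n t) Vn_coord.
by case: ifP => _; rewrite ?addr0 ?mulrDr.
Qed.

Lemma Vn_zero n : iter n V (zero_seq R) = zero_seq R.
Proof.
apply: functional_extensionality => i; rewrite !Vn_coord /zero_seq.
by case: ifP => _; rewrite ?mulr0.
Qed.

Lemma Vn_local n w w' i : (forall j, (j <= i)%N -> w j = w' j) ->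
  iter n V w i = iter n V w' i.
Proof. by move=> H; rewrite (Vn_coord n w) (Vn_coord n w'); case: ifP => // _; rewrite H // leq_subr. Qed.

Lemma Xset_sub (s t : nat -> R) : Xset p s -> Xset p t -> Xset p (sub_seq s t).
Proof. move=> Hs Ht C HC Hcl Hg; exact: HC.2 _ _ (Hs C HC Hcl Hg) (Ht C HC Hcl Hg). Qed.

Lemma Xset_zero : @Xset p R (zero_seq R).
Proof. by move=> C [h _]. Qed.

Lemma Xset_add (s t : nat -> R) : Xset p s -> Xset p t -> Xset p (add_seq s t).
Proof.
move=> Hs Ht.
have -> : add_seq s t = sub_seq s (sub_seq (zero_seq R) t).
  by apply: functional_extensionality => i; rewrite /add_seq /sub_seq /zero_seq sub0r opprK.
by apply: Xset_sub => //; apply: Xset_sub => //; apply: Xset_zero.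
Qed.

Lemma Xset_closed : prod_closed (@Xset p R).
Proof.
move=> s Hs C HC Hcl Hg; apply: (Hcl) => N; have [c [Xc Hc]] := Hs N.
by exists c; split => //; exact: Xc C HC Hcl Hg.
Qed.

Lemma Xset_V (s : nat -> R) : Xset p s -> Xset p (V s).
Proof.
move=> Hs C HC Hcl Hg.
apply: (Hs (fun t => C (V t))).
- split.
  + by have := Vn_zero 1; rewrite /= => ->; exact: HC.1.
  + move=> s1 t1 h1 h2; have := Vn_sub 1 s1 t1; rewrite /= => ->; exact: HC.2.
- move=> t Ht; apply Hcl => N; have [c [Cc Hc]] := Ht N.
  exists (V c); split => // i Hi.
  apply: (Vn_local 1) => j Hj; apply: Hc; exact: leq_ltn_trans Hj Hi.
- move=> g [n [r ->]]; apply: Hg; by exists n.+1, r.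
Qed.

Lemma Xset_iterV n (s : nat -> R) : Xset p s -> Xset p (iter n V s).
Proof. by elim: n => //= n IH Hs; apply: Xset_V; apply: IH. Qed.

End Pf.

Section Maps.
Variables (p : nat) (R S : comPzRingType) (f : {rmorphism R -> S}).

Lemma Xmap_V s : Xmap f (Vop p s) = Vop p (Xmap f s).
Proof.
apply: functional_extensionality => -[|k]; rewrite /Xmap /Vop ?rmorph0 //.
by rewrite rmorphM rmorph_nat.
Qed.

Lemma Xmap_iterV n t : Xmap f (iter n (@Vop p R) t) = iter n (@Vop p S) (Xmap f t).
Proof. by elim: n => //= n IH; rewrite Xmap_V IH. Qed.

Lemma Xmap_teich r : Xmap f (teich p r) = teich p (f r).
Proof. by apply: functional_extensionality => n; rewrite /Xmap /teich rmorphXn. Qed.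

Lemma Xset_map s : Xset p s -> Xset p (Xmap f s).
Proof.
move=> Hs C HC Hcl Hg; apply: (Hs (fun t => C (Xmap f t))).
- split.
  + have -> : Xmap f (zero_seq R) = zero_seq S.
      by apply: functional_extensionality => i; rewrite /Xmap /zero_seq rmorph0.
    exact: HC.1.
  + move=> s1 t1 h1 h2.
    have -> : Xmap f (sub_seq s1 t1) = sub_seq (Xmap f s1) (Xmap f t1).
      by apply: functional_extensionality => i; rewrite /Xmap /sub_seq rmorphB.
    exact: HC.2.
- move=> t Ht; apply Hcl => N; have [c [Cc Hc]] := Ht N.
  exists (Xmap f c); split => // i Hi; by rewrite /Xmap Hc.
- move=> g [n [r ->]]; rewrite Xmap_iterV Xmap_teich; apply: Hg; by exists n, (f r).
Qed.

End Maps.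

Section Complete.
Variables (p : nat) (R : comPzRingType).
Local Notation V := (@Vop p R).

Lemma complete : X_complete p R.
Proof.
split.
  move=> s _ H; apply: functional_extensionality => i.
  have [t [_ ->]] := H i.+1; exact: Vn_low.
move=> x Hx Hd.
have stab : forall n k i, (i < n)%N -> x (n + k)%N i = x n i.
  move=> n k i hi; elim: k => [|k IH]; first by rewrite addn0.
  rewrite addnS -IH.
  have [t [_ E]] := Hd (n + k)%N.
  have := congr1 (fun s => s i) E; rewrite /= Vn_low; last exact: leq_trans hi (leq_addr _ _).
  by rewrite /sub_seq => /eqP; rewrite subr_eq0 => /eqP.
have stab' : forall n m i, (i < n)%N -> (n <= m)%N -> x m i = x n i.
  by move=> n m i hi hm; rewrite -(subnKC hm); apply: stab.
have [t Ht] : exists t : nat -> nat -> R, forall k,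
    Xset p (t k) /\ sub_seq (x k.+1) (x k) = iter k V (t k).
  apply: (functional_choice (fun k (u : nat -> R) =>
     Xset p u /\ sub_seq (x k.+1) (x k) = iter k V u)) => k.
  have [u [h1 h2]] := Hd k; by exists u.
pose y := fun i => x i.+1 i.
pose fix P n M := if M is M'.+1 then add_seq (P n M') (iter M' V (t (n + M')%N))
                  else zero_seq R.
have PS : forall n M, P n M.+1 = add_seq (P n M) (iter M V (t (n + M)%N)) by [].
have XP : forall n M, Xset p (P n M).
  move=> n; elim => [|M IH] /=; first exact: Xset_zero.
  by apply: Xset_add => //; apply: Xset_iterV; case: (Ht (n + M)%N).
have Pst : forall n i k, P n (i.+1 + k)%N i = P n i.+1 i.
  move=> n i; elim => [|k IH]; first by rewrite addn0.
  by rewrite addnS PS /add_seq IH Vn_low ?addr0 // leq_addr.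
have Pst' : forall n i M, (i < M)%N -> P n M i = P n i.+1 i.
  by move=> n i M hi; rewrite -(subnKC hi); apply: Pst.
pose u := fun n i => P n i.+1 i.
have Xu : forall n, Xset p (u n).
  move=> n; apply: Xset_closed => N; exists (P n N); split => // i hi.
  by rewrite /u Pst'.
have VP : forall n M, iter n V (P n M) = sub_seq (x (n + M)%N) (x n).
  move=> n; elim => [|M IH].
    rewrite /= Vn_zero; apply: functional_extensionality => i.
    by rewrite /zero_seq /sub_seq addn0 subrr.
  rewrite (PS n M) Vn_add IH -iterD -(proj2 (Ht (n + M)%N)).
  apply: functional_extensionality => i; rewrite /add_seq /sub_seq addnS.
  by rewrite addrC addrA -(addrA _ (- _)) addNr addr0.
exists y; split.
  apply: Xset_closed => N; exists (x N); split => // i hi.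
  by rewrite /y (stab' i.+1 N).
move=> n; exists (u n); split => //.
apply: functional_extensionality => i.
rewrite (@Vn_local p R n (u n) (P n i.+1) i); last first.
  by move=> j hj; rewrite /u (Pst' n j i.+1).
by rewrite VP /sub_seq /y (stab' i.+1 (n + i.+1)%N) // leq_addl.
Qed.

End Complete.

Theorem lemma2p4 (p : nat) (hp : prime p) : X_is_preWitt p.
Proof.
split; first by move=> R; split; [exact: Xset_zero | exact: Xset_sub].
split; first by move=> R s; exact: Xset_V.
split; first by move=> R r C HC Hcl Hg; apply: Hg; exists 0%N, r.
split; first by move=> R S f s; exact: Xset_map.
split; first by move=> R S f s; exact: Xmap_V.
split; first by move=> R S f r; exact: Xmap_teich.
split.
  move=> R; apply: functional_extensionality => n.
  by rewrite /teich /zero_seq expr0n eqn0Ngt expn_gt0 prime_gt0.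
split.
  move=> hp2 R x; apply: functional_extensionality => n.
  have op : odd p by case: (even_prime hp) => // h; rewrite h in hp2.
  rewrite /teich /sub_seq /zero_seq sub0r exprNn -signr_odd oddX op orbT expr1.
  by rewrite mulN1r.
split.
  move=> R x y g; rewrite /g; apply: functional_extensionality => -[|k].
    by rewrite /sub_seq /Vop /add_seq /scale_seq /teich expn0 !expr1 !sub0r mulrnDl opprD.
  rewrite /sub_seq /Vop /add_seq /scale_seq /teich.
  by rewrite -!exprM -expnS !mulr_natl !subrr addr0.
split; first by move=> R; exact: complete.
move=> A hA s _ hs; apply: functional_extensionality => n.
by apply: hA; have := congr1 (fun f => f n) hs.
Qed.
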